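(* For each $m\geq1$, $\mathrm{Aut}_m(H)$ is a normal subgroup of $\mathrm{Aut}_c(H)$. Moreover, $\mathrm{Aut}_0(H)\supseteq\mathrm{Aut}_1(H)\supseteq\mathrm{Aut}_2(H)\supseteq\cdots$.
   Context: Let $k$ be a field and $0\neq q\in k$ not a root of unity. $H=k_q[x,x^{-1},y]$ is the $k$-algebra generated by $x,x^{-1},y$ with $xx^{-1}=x^{-1}x=1$, $yx=qxy$, a Hopf algebra with $\Delta(x)=x\otimes x$, $\Delta(x^{-1})=x^{-1}\otimes x^{-1}$, $\Delta(y)=y\otimes x+1\otimes y$, $\varepsilon(x)=1$, $\varepsilon(y)=0$; $\{x^ny^m:n\in\mathbb{Z},m\in\mathbb{N}\}$ is a $k$-basis. $H_0=\mathrm{span}\{x^n\}$, $H(m)=H_0y^m$. $\mathrm{Aut}_c(H)$ is the group under composition of coalgebra automorphisms of $H$; $\mathrm{Aut}_0(H)=\{\phi\in\mathrm{Aut}_c(H):\phi(1)=1\}$; for $m\geq1$, $\mathrm{Aut}_m(H)=\{\phi\in\mathrm{Aut}_c(H):\phi(h)=h\text{ for all }h\in\sum_{i=0}^mH(i)\}$. *)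

(* Defs.v *)
(* using multinomials' monalg ({malg k[K]}: finitely
   supported functions K -> k, i.e. the free k-vector space on K). *)
From HB Require Import structures.
From mathcomp Require Import all_boot all_order all_algebra.
From mathcomp Require Import finmap.
From mathcomp Require monalg.
Import monalg.
Set Implicit Arguments. Unset Strict Implicit. Unset Printing Implicit Defensive.
Import Order.TTheory GRing.Theory Num.Theory.
Local Open Scope ring_scope.

Section QuantumPlane.
Variables (k : fieldType) (q : k).

(* index (n, m) stands for the basis monomial x^n y^m, n : int, m : nat *)
Definition Idx := (int * nat)%type.
(* H = k_q[x, x^-1, y] as a k-vector space with basis {x^n y^m} *)
Definition HH := @malg Idx k.
(* H (x) H, with basis {x^n y^m (x) x^n' y^m'} *)
Definition TT := @malg (Idx * Idx)%type k.

Definition mon (a : Idx) : HH := mkmalgU a 1.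

Definition tens (u v : HH) : TT :=
  \sum_(a <- msupp u) \sum_(b <- msupp v) mkmalgU (a, b) (u@_a * v@_b).

(* product of H:  (x^a y^b)(x^c y^d) = q^(b c) x^(a+c) y^(b+d),
   which is the multiplication determined by y x = q x y, x x^-1 = 1 *)
Definition mulH (u v : HH) : HH :=
  \sum_(a <- msupp u) \sum_(b <- msupp v)
     mkmalgU (a.1 + b.1, (a.2 + b.2)%N) (u@_a * v@_b * q ^ (a.2%:Z * b.1)).

Definition mulT (s t : TT) : TT :=
  \sum_(a <- msupp s) \sum_(b <- msupp t)
     (s@_a * t@_b) *: tens (mulH (mon a.1) (mon b.1)) (mulH (mon a.2) (mon b.2)).

Definition oneT : TT := mkmalgU ((0, 0%N), (0, 0%N)) (1 : k).
(* Delta(y) = y (x) x + 1 (x) y *)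
Definition DeltaY : TT := mkmalgU ((0, 1%N), (1, 0%N)) (1 : k) + mkmalgU ((0, 0%N), (0, 1%N)) (1 : k).
Definition DeltaXn (n : int) : TT := mkmalgU ((n, 0%N), (n, 0%N)) (1 : k).
(* Delta is an algebra map: Delta(x^n y^m) = Delta(x)^n Delta(y)^m *)
Definition DeltaMon (a : Idx) : TT :=
  mulT (DeltaXn a.1) (iter a.2 (fun t => mulT t DeltaY) oneT).
Definition Delta (u : HH) : TT := \sum_(a <- msupp u) u@_a *: DeltaMon a.
(* counit: eps(x) = 1, eps(y) = 0, i.e. eps(x^n y^m) = [m == 0] *)
Definition eps (u : HH) : k := \sum_(a <- msupp u | a.2 == 0%N) u@_a.

Definition tensmap (f g : HH -> HH) (t : TT) : TT :=
  \sum_(a <- msupp t) t@_a *: tens (f (mon a.1)) (g (mon a.2)).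

Definition is_klinear (f : HH -> HH) : Prop :=
  forall (c : k) (u v : HH), f (c *: u + v) = c *: f u + f v.

Definition Aut_c (f : HH -> HH) : Prop :=
  [/\ is_klinear f, bijective f,
      (forall u, Delta (f u) = tensmap f f (Delta u))
    & (forall u, eps (f u) = eps u)].

Definition Aut_0 (f : HH -> HH) : Prop := Aut_c f /\ f (mon (0, 0%N)) = mon (0, 0%N).

(* membership in H(0) + H(1) + ... + H(m), where H(i) = H_0 y^i *)
Definition in_Hsum (m : nat) (h : HH) : Prop :=
  forall a, a \in msupp h -> (a.2 <= m)%N.

Definition Aut_m (m : nat) (f : HH -> HH) : Prop :=
  Aut_c f /\ forall h, in_Hsum m h -> f h = h.

End QuantumPlane.

(* Main.v *)
Require Import Defs.
From HB Require Import structures.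
From mathcomp Require Import all_boot all_order all_algebra.
From mathcomp Require Import finmap zify.
From mathcomp Require monalg.
Import monalg.
Import Order.TTheory GRing.Theory Num.Theory.
Local Open Scope ring_scope.
Set Implicit Arguments. Unset Strict Implicit. Unset Printing Implicit Defensive.

Section Gen.
Variable (k : fieldType).

Section Lin.
Variables (K : choiceType) (V : lmodType k).

Definition lin (G : K -> V) (g : {malg k[K]}) : V :=
  \sum_(a <- msupp g) g@_a *: G a.

Lemma lin_sub G g (d : {fset K}) : (msupp g `<=` d)%fset ->
  lin G g = \sum_(a <- d) g@_a *: G a.
Proof.
move=> sd; rewrite /lin; apply: big_fset_incl => // x _ /mcoeff_outdom ->.
by rewrite scale0r.
Qed.

Lemma lin_lin G c g1 g2 : lin G (c *: g1 + g2) = c *: lin G g1 + lin G g2.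
Proof.
set d := (msupp (c *: g1 + g2) `|` msupp g1 `|` msupp g2)%fset.
rewrite (@lin_sub _ _ d); last by apply/fsubsetP => x xa; rewrite !inE xa.
rewrite (@lin_sub _ g1 d); last by apply/fsubsetP => x xa; rewrite !inE xa ?orbT.
rewrite (@lin_sub _ g2 d); last by apply/fsubsetP => x xa; rewrite !inE xa ?orbT.
rewrite scaler_sumr -big_split; apply: eq_bigr => a _.
by rewrite mcoeffD mcoeffZ scalerDl scalerA.
Qed.

Lemma lin0 G : lin G 0 = 0.
Proof. by rewrite /lin msupp0 big_seq_fset0. Qed.

Lemma linD G g1 g2 : lin G (g1 + g2) = lin G g1 + lin G g2.
Proof. by have := lin_lin G 1 g1 g2; rewrite !scale1r. Qed.

Lemma linZ G c g : lin G (c *: g) = c *: lin G g.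
Proof. by have := lin_lin G c g 0; rewrite !addr0 lin0 addr0. Qed.

Lemma linU G a c : lin G (mkmalgU a c) = c *: G a.
Proof.
rewrite /lin msuppU; case: eqP => [->|_]; first by rewrite big_seq_fset0 scale0r.
by rewrite big_seq_fset1 mcoeffUU.
Qed.

Lemma lin_ext G1 G2 g : (forall a, G1 a = G2 a) -> lin G1 g = lin G2 g.
Proof. by move=> e; apply: eq_bigr => a _; rewrite e. Qed.

End Lin.

Lemma lin_comm (K : choiceType) (V W : lmodType k) (F : V -> W)
  (HF : forall c u v, F (c *: u + v) = c *: F u + F v) (G : K -> V) g :
  F (lin G g) = lin (fun a => F (G a)) g.
Proof.
have F0 : F 0 = 0.
  have H := HF 1 0 0; rewrite scale1r addr0 in H.
  apply/esym/(@addrI _ (F 0)); by rewrite addr0 {1}H scale1r.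
have FD u v : F (u + v) = F u + F v by have := HF 1 u v; rewrite !scale1r => ->.
have FZ c u : F (c *: u) = c *: F u by have := HF c u 0; rewrite !addr0 F0 addr0 => ->.
rewrite /lin; elim: (msupp g : seq K) => [|a r IH]; first by rewrite !big_nil.
by rewrite !big_cons FD FZ IH.
Qed.


Lemma scaleU (K : choiceType) (a : K) (c : k) : c *: mkmalgU a (1 : k) = mkmalgU a c.
Proof. by apply/malgP => b; rewrite mcoeffZ !mcoeffU mulr_natr. Qed.

Lemma lin_id (K : choiceType) (g : {malg k[K]}) : lin (fun a => mkmalgU a (1 : k)) g = g.
Proof.
rewrite [RHS]monalgE; apply: eq_bigr => a _; exact: scaleU.
Qed.

Lemma lin_coef2 (K K' : choiceType) (G : K -> {malg k[K']}) g z :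
  (lin G g)@_z = \sum_(a <- msupp g) g@_a * (G a)@_z.
Proof. rewrite /lin raddf_sum; apply: eq_bigr => a _; exact: mcoeffZ. Qed.

Lemma sum_delta (T : eqType) (r : seq T) (G : T -> k) a0 : uniq r ->
  (forall a, a != a0 -> G a = 0) ->
  \sum_(a <- r) G a = if a0 \in r then G a0 else 0.
Proof.
move=> ur H; case: ifP => ain.
  rewrite (bigD1_seq a0) //= big1 ?addr0 // => a; exact: H.
by rewrite big1_seq // => a /andP[_ ar]; apply: H; apply: contraFneq ain => <-.
Qed.

Lemma sum_supp_delta (K : choiceType) (g : {malg k[K]}) (F : K -> k) a0 :
  (forall a, a != a0 -> g@_a * F a = 0) ->
  \sum_(a <- msupp g) g@_a * F a = g@_a0 * F a0.
Proof.
move=> H; rewrite (@sum_delta _ _ _ a0) //; case: ifP => // /negbT /mcoeff_outdom ->.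
by rewrite mul0r.
Qed.

End Gen.

Section H.
Variables (k : fieldType) (q : k).
Local Notation HH := (HH k).
Local Notation TT := (TT k).

Definition mon2 (x : Idx * Idx) : TT := mkmalgU x (1 : k).
Definition iadd (a b : Idx) : Idx := (a.1 + b.1, (a.2 + b.2)%N).

Lemma tens_lin (u v : HH) : tens u v = lin (fun a => lin (fun b => mon2 (a, b)) v) u.
Proof.
rewrite /tens /lin; apply: eq_bigr => a _; rewrite scaler_sumr.
by apply: eq_bigr => b _; rewrite scalerA scaleU.
Qed.

Lemma tens_coef (u v : HH) x y : (tens u v)@_(x, y) = u@_x * v@_y.
Proof.
rewrite tens_lin lin_coef2 (@sum_supp_delta _ _ _ _ x); last first.
  move=> a ne; rewrite lin_coef2 big1 ?mulr0 // => b _.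
  by rewrite mcoeffU xpair_eqE (negbTE ne) mulr0.
rewrite lin_coef2 (@sum_supp_delta _ _ _ _ y); last first.
  by move=> b ne; rewrite mcoeffU xpair_eqE (negbTE ne) andbF mulr0.
by rewrite mcoeffU eqxx mulr1.
Qed.

Lemma mon_supp (a : Idx) : msupp (mon k a) = [fset a]%fset.
Proof. by rewrite msuppU oner_eq0. Qed.

Lemma mulH_mon (a b : Idx) :
  mulH q (mon k a) (mon k b) = mkmalgU (iadd a b) (q ^ (a.2%:Z * b.1)).
Proof. by rewrite /mulH !mon_supp !big_seq_fset1 !mcoeffUU !mul1r. Qed.

Definition X : Idx * Idx -> Idx * Idx -> TT := locked (fun a b =>
  tens (mulH q (mon k a.1) (mon k b.1)) (mulH q (mon k a.2) (mon k b.2))).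

Lemma mulT_lin (s t : TT) : mulT q s t = lin (fun a => lin (fun b => X a b) t) s.
Proof.
rewrite /mulT /lin /X -lock; apply: eq_bigr => a _; rewrite scaler_sumr.
by apply: eq_bigr => b _; rewrite scalerA.
Qed.

Lemma X_coef a b z1 z2 : (X a b)@_(z1, z2) =
  (q ^ (a.1.2%:Z * b.1.1) *+ (iadd a.1 b.1 == z1)) *
  (q ^ (a.2.2%:Z * b.2.1) *+ (iadd a.2 b.2 == z2)).
Proof. by rewrite /X -lock tens_coef !mulH_mon !mcoeffU. Qed.

Lemma X_zero a b z1 z2 : (z1 != iadd a.1 b.1) || (z2 != iadd a.2 b.2) ->
  (X a b)@_(z1, z2) = 0.
Proof.
rewrite X_coef; case/orP => /negbTE e.
  by rewrite [iadd a.1 b.1 == _]eq_sym e mulr0n mul0r.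
by rewrite [iadd a.2 b.2 == _]eq_sym e mulr0n mulr0.
Qed.

Definition b1 : Idx * Idx := ((0, 1%N), (1, 0%N)).
Definition b2 : Idx * Idx := ((0, 0%N), (0, 1%N)).

Lemma lin2 (K : choiceType) (V : lmodType k) (G : K -> V) x y :
  lin G (mkmalgU x (1:k) + mkmalgU y (1:k)) = G x + G y.
Proof. by rewrite linD !linU !scale1r. Qed.

Lemma DeltaY_lin (V : lmodType k) (G : Idx * Idx -> V) :
  lin G (DeltaY k) = G b1 + G b2.
Proof. exact: lin2. Qed.

Lemma coefU1 (K : choiceType) (x z : K) : (mkmalgU x (1:k))@_z = (x == z)%:R.
Proof. by rewrite mcoeffU. Qed.

Lemma oneT_coef z : (oneT k)@_z = (((0, 0%N), (0, 0%N)) == z)%:R.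
Proof. exact: coefU1. Qed.

Definition D : nat -> TT := locked (fun M => iter M (fun t => mulT q t (DeltaY k)) (oneT k)).

Lemma D_coef M z : (D M.+1)@_z =
  \sum_(a <- msupp (D M)) (D M)@_a * ((X a b1)@_z + (X a b2)@_z).
Proof.
rewrite /D -lock iterS mulT_lin lin_coef2; apply: eq_bigr => a _.
by rewrite DeltaY_lin mcoeffD.
Qed.

Lemma mul0_helper (c x1 x2 : k) : x1 = 0 -> x2 = 0 -> c * (x1 + x2) = 0.
Proof. by move=> -> ->; rewrite addr0 mulr0. Qed.

Lemma D0 : D 0 = oneT k. Proof. by rewrite /D -lock. Qed.
Lemma DeltaMon_D a : DeltaMon q a = mulT q (mon2 ((a.1, 0%N), (a.1, 0%N))) (D a.2).
Proof. by rewrite /D -lock. Qed.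
Lemma ar_supp (a : Idx * Idx) b (z : Idx * Idx) M : b = b1 \/ b = b2 ->
  ~~ ((z.1.1 == 0) && ((z.1.2 + z.2.2)%N == M.+1)) ->
  (a.1.1 == 0) && ((a.1.2 + a.2.2)%N == M) ->
  (z.1 != iadd a.1 b.1) || (z.2 != iadd a.2 b.2).
Proof.
case: a z => [[a11 a12] [a21 a22]] [[z11 z12] [z21 z22]] [->|->];
  rewrite /iadd /b1 /b2 /= !xpair_eqE; lia.
Qed.

Lemma D_supp M (z : Idx * Idx) :
  ~~ ((z.1.1 == 0) && ((z.1.2 + z.2.2)%N == M)) -> (D M)@_z = 0.
Proof.
elim: M z => [|M IH] [[z11 z12] [z21 z22]] H.
  rewrite D0 oneT_coef; case: eqP => // e; move: H; case: e => <- <- _ <-.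
  by rewrite eqxx.
rewrite D_coef big1_seq // => a _.
have [->|nz] := eqVneq ((D M)@_a) 0; first by rewrite mul0r.
have Ha : (a.1.1 == 0) && ((a.1.2 + a.2.2)%N == M).
  by apply/negPn; apply: contra nz => h; rewrite IH.
apply: mul0_helper; apply: X_zero; apply: (ar_supp _ H Ha); by [left|right].
Qed.

Lemma X_eval a b z1 z2 : z1 = iadd a.1 b.1 -> z2 = iadd a.2 b.2 ->
  (X a b)@_(z1, z2) = q ^ (a.1.2%:Z * b.1.1) * q ^ (a.2.2%:Z * b.2.1).
Proof. by move=> -> ->; rewrite X_coef !eqxx !mulr1n. Qed.

Lemma ar_e1 (a : Idx * Idx) M : ((0, 0%N) != iadd a.1 b1.1) || ((0, M) != iadd a.2 b1.2).
Proof. case: a => [[a11 a12] [a21 a22]]; rewrite /iadd /b1 /= !xpair_eqE; lia. Qed.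

Lemma ar_e2 (a : Idx * Idx) M : a != ((0, 0%N), (0, M)) ->
  ((0, 0%N) != iadd a.1 b2.1) || ((0, M.+1) != iadd a.2 b2.2).
Proof. case: a => [[a11 a12] [a21 a22]]; rewrite /iadd /b2 /= !xpair_eqE; lia. Qed.

Lemma fin_helper (x1 x2 : k) : x1 = 0 -> x2 = 1 -> 1 * (x1 + x2) = 1.
Proof. by move=> -> ->; rewrite add0r mul1r. Qed.

Lemma fin_helper2 (x1 x2 : k) : x1 = 1 -> x2 = 0 -> 1 * (x1 + x2) = 1.
Proof. by move=> -> ->; rewrite addr0 mul1r. Qed.

Lemma iadd_eq (a b : Idx) (x : int) (y : nat) :
  x = a.1 + b.1 -> y = (a.2 + b.2)%N -> (x, y) = iadd a b.
Proof. by move=> -> ->. Qed.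

Ltac ia := apply: iadd_eq => /=; lia.

Lemma D_e M : (D M)@_((0, 0%N), (0, M)) = 1.
Proof.
elim: M => [|M IH]; first by rewrite D0 oneT_coef eqxx.
rewrite D_coef (@sum_supp_delta _ _ _ (fun a => (X a b1)@_((0, 0%N), (0, M.+1)) +
   (X a b2)@_((0, 0%N), (0, M.+1))) ((0, 0%N), (0, M))); last first.
  move=> a ne; apply: mul0_helper; apply: X_zero; [exact: ar_e1 | exact: ar_e2].
rewrite IH; apply: fin_helper; first by apply: X_zero; exact: ar_e1.
rewrite X_eval; [|ia|ia].
by rewrite /= !mul0r !mulr0 expr0z mulr1.
Qed.

Lemma ar_c1 (a : Idx * Idx) M : a != ((0, 0%N), (0, M)) ->
  ((0, 1%N) != iadd a.1 b1.1) || ((1, M) != iadd a.2 b1.2).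
Proof. case: a => [[a11 a12] [a21 a22]]; rewrite /iadd /b1 /= !xpair_eqE; lia. Qed.

Lemma ar_c2 (a : Idx * Idx) M : a != ((0, 1%N), (1, M)) ->
  ((0, 1%N) != iadd a.1 b2.1) || ((1, M.+1) != iadd a.2 b2.2).
Proof. case: a => [[a11 a12] [a21 a22]]; rewrite /iadd /b2 /= !xpair_eqE; lia. Qed.

Lemma ar_c3 (a : Idx * Idx) :
  ((0, 1%N) != iadd a.1 b2.1) || ((1, 0%N) != iadd a.2 b2.2).
Proof. case: a => [[a11 a12] [a21 a22]]; rewrite /iadd /b2 /= !xpair_eqE; lia. Qed.

Lemma expz_nat (n : nat) : q ^ (n%:Z) = q ^+ n.
Proof. by []. Qed.

Lemma sum_two (K : choiceType) (g : {malg k[K]}) (F1 F2 : K -> k) a1 a2 :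
  (forall a, a != a1 -> g@_a * F1 a = 0) -> (forall a, a != a2 -> g@_a * F2 a = 0) ->
  \sum_(a <- msupp g) g@_a * (F1 a + F2 a) = g@_a1 * F1 a1 + g@_a2 * F2 a2.
Proof.
move=> H1 H2; rewrite -(sum_supp_delta H1) -(sum_supp_delta H2) -big_split /=.
by apply: eq_bigr => a _; rewrite mulrDr.
Qed.

Lemma D_c_step M : (D M.+2)@_((0, 1%N), (1, M.+1)) =
   (D M.+1)@_((0, 0%N), (0, M.+1)) * (X ((0, 0%N), (0, M.+1)) b1)@_((0, 1%N), (1, M.+1)) +
   (D M.+1)@_((0, 1%N), (1, M)) * (X ((0, 1%N), (1, M)) b2)@_((0, 1%N), (1, M.+1)).
Proof.
rewrite D_coef; apply: sum_two.
- by move=> a ne; rewrite X_zero; [rewrite mulr0 | exact: ar_c1].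
- by move=> a ne; rewrite X_zero; [rewrite mulr0 | exact: ar_c2].
Qed.

Lemma D_c M : (D M.+1)@_((0, 1%N), (1, M)) = \sum_(j < M.+1) q ^+ j.
Proof.
elim: M => [|M IH].
  rewrite D_coef (@sum_supp_delta _ _ _ (fun a => (X a b1)@_((0, 1%N), (1, 0%N)) +
     (X a b2)@_((0, 1%N), (1, 0%N))) ((0, 0%N), (0, 0%N))); last first.
    move=> a ne; apply: mul0_helper; apply: X_zero; [exact: ar_c1 | exact: ar_c3].
  rewrite D_e big_ord1 expr0; apply: fin_helper2; last by apply: X_zero; exact: ar_c3.
  rewrite X_eval; [|ia|ia].
  by rewrite /= ?(mul0r, mulr0, mulr1, mul1r, expr0z).
rewrite D_c_step D_e IH X_eval; [|ia|ia]; rewrite X_eval; [|ia|ia].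
rewrite [RHS]big_ord_recr [LHS]addrC; congr (_ + _).
  by rewrite /= ?(mul0r, mulr0, mulr1, mul1r, expr0z).
by rewrite /= ?(mul0r, mulr0, mulr1, mul1r, expr0z).
Qed.

Lemma sumq_neq0 (hq : forall n : nat, (0 < n)%N -> q ^+ n != 1) M :
  \sum_(j < M.+1) q ^+ j != 0.
Proof.
apply: contra (hq M.+1 isT) => /eqP S0.
by rewrite -subr_eq0 subrX1 S0 mulr0.
Qed.

Lemma ar_dm (n : int) (b z : Idx * Idx) :
  b != ((z.1.1 - n, z.1.2), (z.2.1 - n, z.2.2)) ->
  (z.1 != iadd (n, 0%N) b.1) || (z.2 != iadd (n, 0%N) b.2).
Proof.
case: b z => [[a11 a12] [a21 a22]] [[z11 z12] [z21 z22]]; rewrite /iadd /= !xpair_eqE; lia.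
Qed.

Lemma DM_coef (a : Idx) (z : Idx * Idx) :
  (DeltaMon q a)@_z = (D a.2)@_((z.1.1 - a.1, z.1.2), (z.2.1 - a.1, z.2.2)).
Proof.
case: z => [[z11 z12] [z21 z22]] /=.
rewrite DeltaMon_D mulT_lin /mon2 linU scale1r lin_coef2.
rewrite (@sum_supp_delta _ _ _ (fun b => (X ((a.1, 0%N), (a.1, 0%N)) b)@_((z11, z12), (z21, z22)))
   ((z11 - a.1, z12), (z21 - a.1, z22))); last first.
  move=> b ne; rewrite X_zero; first by rewrite mulr0.
  exact: (@ar_dm a.1 b ((z11, z12), (z21, z22))).
rewrite X_eval; [|ia|ia].
by rewrite /= ?(mul0r, mulr0, mulr1, mul1r, expr0z).
Qed.

Lemma DM_supp (a : Idx) (z : Idx * Idx) : (DeltaMon q a)@_z != 0 ->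
  z.1.1 = a.1 /\ (z.1.2 + z.2.2)%N = a.2.
Proof.
rewrite DM_coef => nz.
have /negPn /andP[] := contra (fun h => introT eqP (D_supp h)) nz.
by rewrite /= subr_eq0 => /eqP e1 /eqP e2.
Qed.

Lemma DM_c (n : int) M :
  (DeltaMon q (n, M.+1))@_((n, 1%N), (n + 1, M)) = \sum_(j < M.+1) q ^+ j.
Proof.
rewrite DM_coef /= subrr.
have -> : n + 1 - n = 1 by rewrite addrAC subrr add0r.
exact: D_c.
Qed.

Lemma DM0 (n : int) : DeltaMon q (n, 0%N) = mon2 ((n, 0%N), (n, 0%N)).
Proof.
apply/malgP => -[[z11 z12] [z21 z22]].
rewrite DM_coef D0 oneT_coef /mon2 coefU1 /= !xpair_eqE.
have E (x : int) : (0 == x - n) = (n == x) by rewrite eq_sym subr_eq0 eq_sym.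
by rewrite !E.
Qed.

End H.

Section Main.
Variables (k : fieldType) (q : k).
Hypothesis hq : forall n : nat, (0 < n)%N -> q ^+ n != 1.
Local Notation HH := (HH k).
Local Notation TT := (TT k).

Definition Hz m (h : HH) := forall b : Idx, (m < b.2)%N -> h@_b = 0.
Definition St m (t : TT) := forall x y : Idx, (0 < x.2)%N -> (m < y.2)%N -> t@_(x, y) = 0.

Lemma Delta_coef (u : HH) z :
  (Delta q u)@_z = \sum_(a <- msupp u) u@_a * (DeltaMon q a)@_z.
Proof. exact: (lin_coef2 (DeltaMon q)). Qed.

Lemma mon_coef (a b : Idx) : (mon k a)@_b = (a == b)%:R.
Proof. exact: coefU1. Qed.

Lemma Delta_mon a : Delta q (mon k a) = DeltaMon q a.
Proof.
rewrite -[Delta q _]/(lin (DeltaMon q) (mon k a)) /lin mon_supp big_seq_fset1.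
by rewrite mon_coef eqxx scale1r.
Qed.

Lemma tensmap_coef f g (t : TT) x y : (tensmap f g t)@_(x, y) =
  \sum_(a <- msupp t) t@_a * ((f (mon k a.1))@_x * (g (mon k a.2))@_y).
Proof.
rewrite -[tensmap f g t]/(lin (fun a => tens (f (mon k a.1)) (g (mon k a.2))) t).
by rewrite lin_coef2; apply: eq_bigr => a _; rewrite tens_coef.
Qed.

Lemma tensmap_mon2 f g x : tensmap f g (mon2 k x) = tens (f (mon k x.1)) (g (mon k x.2)).
Proof.
rewrite -[tensmap f g _]/(lin (fun a => tens (f (mon k a.1)) (g (mon k a.2))) (mon2 k x)).
by rewrite /mon2 linU scale1r.
Qed.

Lemma grouplike (v : HH) : Delta q v = tens v v ->
  forall a : Idx, (0 < a.2)%N -> v@_a = 0.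
Proof.
move=> Dv a a0; apply/eqP; apply/negPn/negP => nz.
pose P := fun M => has (fun b : Idx => b.2 == M) (msupp v).
have exP : exists M, P M.
  by exists a.2; apply/hasP; exists a => //; rewrite -mcoeff_neq0.
have ubP : forall M, P M -> (M <= \max_(b <- msupp v) b.2)%N.
  by move=> M /hasP [b bin /eqP <-]; apply: leq_bigmax_seq.
case: (ex_maxnP exP ubP) => M /hasP [b0 b0in /eqP b0M] maxM.
have Mpos : (0 < M)%N.
  apply: leq_trans a0 _; apply: maxM; apply/hasP; exists a => //.
  by rewrite -mcoeff_neq0.
have : (Delta q v)@_(b0, b0) != 0.
  by rewrite Dv tens_coef mulf_neq0 // mcoeff_neq0.
rewrite Delta_coef big1_seq ?eqxx // => b /andP[_ bin].
have [->|nzD] := eqVneq ((DeltaMon q b)@_(b0, b0)) 0; first by rewrite mulr0.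
case: (DM_supp nzD) => /= _ e.
have : (b.2 <= M)%N by apply: maxM; apply/hasP; exists b.
rewrite -e b0M => h; suff : False by []; lia.
Qed.

Lemma crit m (v : HH) : St m (Delta q v) -> Hz m.+1 v.
Proof.
move=> S [n M] /= hM.
case: M hM => [|M] // hM.
have := S (n, 1%N) (n + 1, M) isT hM.
rewrite Delta_coef (@sum_supp_delta _ _ _ (fun a => (DeltaMon q a)@_((n, 1%N), (n + 1, M)))
  (n, M.+1)); last first.
  move=> a ne; have [->|nzD] := eqVneq ((DeltaMon q a)@_((n, 1%N), (n + 1, M))) 0.
    by rewrite mulr0.
  case: (DM_supp nzD) => /= e1 e2; case/negP: ne; apply/eqP.
  by case: a {nzD} e1 e2 => a1 a2 /= <- <-; rewrite add1n.
rewrite DM_c => /eqP; rewrite mulf_eq0 (negbTE (sumq_neq0 hq M)) orbF.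
by move/eqP.
Qed.

Lemma fwd m (u : HH) : Hz m.+1 u -> St m (Delta q u).
Proof.
move=> H x y x0 ym; rewrite Delta_coef big1_seq // => a /andP[_ ain].
have [->|nzD] := eqVneq ((DeltaMon q a)@_(x, y)) 0; first by rewrite mulr0.
case: (DM_supp nzD) => /= _ e; rewrite H ?mul0r //; rewrite -e; lia.
Qed.

Lemma tm m f g (t : TT) : (forall n, Hz 0 (f (mon k (n, 0%N)))) ->
  (forall a : Idx, (a.2 <= m)%N -> Hz m (g (mon k a))) -> St m t ->
  St m (tensmap f g t).
Proof.
move=> Hf Hg Ht x y x0 ym; rewrite tensmap_coef big1_seq // => -[a1 a2] /andP[_ ain].
have [->|nz] := eqVneq (t@_(a1, a2)) 0; first by rewrite mul0r.
case: (leqP a1.2 0) => h1.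
  move: nz; case: a1 {ain} h1 => n1 [|?] // _ nz.
  by rewrite /= (Hf n1 x x0) mul0r mulr0.
have h2 : (a2.2 <= m)%N.
  by rewrite leqNgt; apply: contra nz => h; rewrite (Ht _ _ h1 h).
by rewrite /= (Hg a2 h2 y ym) mulr0 mulr0.
Qed.

Section Pres.
Variable f : HH -> HH.
Hypothesis Hf : forall u, Delta q (f u) = tensmap f f (Delta q u).

Lemma presB n : Hz 0 (f (mon k (n, 0%N))).
Proof.
move=> b hb; apply: grouplike => //.
by rewrite Hf Delta_mon DM0 tensmap_mon2.
Qed.

Lemma stepG m : (forall a : Idx, (a.2 <= m)%N -> Hz m (f (mon k a))) ->
  forall u, Hz m.+1 u -> Hz m.+1 (f u).
Proof.
move=> IH u Hu; apply: crit; rewrite Hf; apply: tm => //; first exact: presB.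
exact: fwd.
Qed.

Lemma mono m (a : Idx) : (a.2 <= m)%N -> Hz m (f (mon k a)).
Proof.
elim: m a => [|m IH] [n s] /= hs.
  by move: hs; rewrite leqn0 => /eqP ->; exact: presB.
apply: stepG => // b hb; rewrite mon_coef.
by have -> : ((n, s) == b) = false by apply/eqP => e; move: hb; rewrite -e /=; lia.
Qed.

Lemma pres m u : Hz m.+1 u -> Hz m.+1 (f u).
Proof. apply: stepG => a; exact: mono. Qed.

End Pres.

Lemma in_HsumP m (h : HH) : in_Hsum m h <-> Hz m h.
Proof.
split=> H b.
  by move=> hb; apply/eqP; rewrite mcoeff_eq0; apply/negP => /H; rewrite leqNgt hb.
move=> bin; rewrite leqNgt; apply/negP => hb; move: bin.
by rewrite -mcoeff_neq0 H ?eqxx.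
Qed.

End Main.

Section Aut.
Variables (k : fieldType) (q : k).
Local Notation HH := (HH k).
Local Notation TT := (TT k).

Lemma tens_linl (w : HH) c (u1 u2 : HH) :
  tens (c *: u1 + u2) w = c *: tens u1 w + tens u2 w.
Proof.
apply/malgP => -[x y].
rewrite (tens_coef (c *: u1 + u2) w x y) [RHS]mcoeffD [in RHS]mcoeffZ.
rewrite [in LHS]mcoeffD [in LHS]mcoeffZ mulrDl -mulrA.
by rewrite -(tens_coef u1 w x y) -(tens_coef u2 w x y).
Qed.

Lemma tens_linr (z : HH) c (u1 u2 : HH) :
  tens z (c *: u1 + u2) = c *: tens z u1 + tens z u2.
Proof.
apply/malgP => -[x y].
rewrite (tens_coef z (c *: u1 + u2) x y) [RHS]mcoeffD [in RHS]mcoeffZ.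
rewrite [in LHS]mcoeffD [in LHS]mcoeffZ mulrDr mulrCA.
by rewrite -(tens_coef z u1 x y) -(tens_coef z u2 x y).
Qed.

Lemma tensmap_lin f g c (t1 t2 : TT) :
  tensmap f g (c *: t1 + t2) = c *: tensmap f g t1 + tensmap f g t2.
Proof. exact: lin_lin. Qed.

Lemma HH_lin (u : HH) : u = lin (fun a => mon k a) u.
Proof. by rewrite [LHS](esym (lin_id u)). Qed.

Lemma tens_map f (Hf : is_klinear f) (u v : HH) :
  tens (f u) (f v) = lin (fun a => lin (fun b => tens (f (mon k a)) (f (mon k b))) v) u.
Proof.
rewrite {1}(HH_lin u) (lin_comm Hf) (lin_comm (fun c u1 u2 => tens_linl (f v) c u1 u2)).
apply: lin_ext => a; rewrite {1}(HH_lin v) (lin_comm Hf).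
exact: (lin_comm (fun c u1 u2 => tens_linr (f (mon k a)) c u1 u2)).
Qed.

Lemma tensmap_tens f (Hf : is_klinear f) (u v : HH) :
  tensmap f f (tens u v) = tens (f u) (f v).
Proof.
rewrite tens_map // tens_lin (lin_comm (tensmap_lin f f)).
apply: lin_ext => a; rewrite (lin_comm (tensmap_lin f f)).
by apply: lin_ext => b; rewrite tensmap_mon2.
Qed.

Lemma tensmap_comp f g (Hf : is_klinear f) (t : TT) :
  tensmap f f (tensmap g g t) = tensmap (f \o g) (f \o g) t.
Proof.
rewrite -[tensmap g g t]/(lin (fun a => tens (g (mon k a.1)) (g (mon k a.2))) t).
rewrite (lin_comm (tensmap_lin f f)).
by apply: lin_ext => a; rewrite tensmap_tens.
Qed.

Lemma tensmap_ext f f' g g' (t : TT) : f =1 f' -> g =1 g' ->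
  tensmap f g t = tensmap f' g' t.
Proof. by move=> ef eg; apply: lin_ext => a; rewrite ef eg. Qed.

Lemma tens_mon (x y : Idx) : tens (mon k x) (mon k y) = mon2 k (x, y).
Proof.
apply/malgP => -[z1 z2]; rewrite (tens_coef (mon k x) (mon k y) z1 z2) !mon_coef /mon2 coefU1 xpair_eqE.
by case: (x == z1); case: (y == z2); rewrite ?mulr1 ?mulr0.
Qed.

Lemma tensmap_id (t : TT) : tensmap id id t = t.
Proof.
rewrite -[RHS]lin_id; apply: lin_ext => -[x y] /=; exact: tens_mon.
Qed.

Lemma AutC_id : Aut_c q id.
Proof.
split => //; first by exists id.
by move=> u; rewrite tensmap_id.
Qed.

Lemma AutC_comp f g : Aut_c q f -> Aut_c q g -> Aut_c q (f \o g).
Proof.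
case=> lf bf Df ef [lg bg Dg eg]; split.
- by move=> c u v /=; rewrite lg lf.
- exact: bij_comp.
- by move=> u /=; rewrite Df Dg tensmap_comp.
- by move=> u /=; rewrite ef eg.
Qed.

Lemma AutC_inv f g : Aut_c q f -> cancel f g -> cancel g f -> Aut_c q g.
Proof.
case=> lf bf Df ef fK gK; split.
- by move=> c u v; apply/(can_inj fK); rewrite gK lf !gK.
- exact: (Bijective gK fK).
- move=> u; have := Df (g u); rewrite gK => ->.
  rewrite tensmap_comp.
    by rewrite (@tensmap_ext (g \o f) id (g \o f) id) ?tensmap_id.
  by move=> c x y; apply/(can_inj fK); rewrite gK lf !gK.
- by move=> u; rewrite -{2}(gK u) ef.
Qed.

End Aut.

Unset Implicit Arguments.

Theorem lemma3p1 (k : fieldType) (q : k) (hq0 : q != 0)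
  (hq : forall n : nat, (0 < n)%N -> q ^+ n != 1) :
  (forall m : nat, (1 <= m)%N ->
     (* Aut_m(H) is a subgroup of Aut_c(H) *)
     [/\ (forall f, Aut_m q m f -> Aut_c q f),
         Aut_m q m id,
         (forall f g, Aut_m q m f -> Aut_m q m g -> Aut_m q m (f \o g)),
         (forall f g, Aut_m q m f -> cancel f g -> cancel g f -> Aut_m q m g)
     (* ... and it is normal *)
       & (forall f g h, Aut_c q f -> cancel f g -> cancel g f ->
            Aut_m q m h -> Aut_m q m (f \o h \o g))]) /\
  (* Aut_0 ⊇ Aut_1 ⊇ Aut_2 ⊇ ... *)
  (forall f, Aut_m q 1 f -> Aut_0 q f) /\
  (forall m : nat, (1 <= m)%N -> forall f, Aut_m q m.+1 f -> Aut_m q m f).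
Proof.
split.
  move=> m m1; split.
  - by move=> f [].
  - by split; [exact: AutC_id | move=> h].
  - move=> f g [cf hf] [cg hg]; split; first exact: AutC_comp.
    by move=> h Hh /=; rewrite hg // hf.
  - move=> f g [cf hf] fK gK; split; first exact: (AutC_inv cf fK gK).
    by move=> h Hh; rewrite -{1}(hf h Hh) fK.
  - move=> f g h cf fK gK [ch hh]; split.
      apply: AutC_comp; first exact: AutC_comp.
      exact: (AutC_inv cf fK gK).
    move=> u Hu /=.
    have [_ _ Dg _] := AutC_inv cf fK gK.
    have Hgu : in_Hsum m (g u).
      case: m m1 Hu {hh} => // m' _ Hu.
      by apply/in_HsumP; apply: (pres hq Dg); apply/in_HsumP.
    by rewrite hh // gK.
split.
  move=> f [cf hf]; split => //; apply: hf => a.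
  by rewrite mon_supp inE => /eqP ->.
move=> m m1 f [cf hf]; split => // h Hh; apply: hf => a /Hh; exact: leqW.
Qed.
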